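(* Let $a,b,n$ be positive integers, $h(j)=aj^n+b$ for $j\ge0$, $h(j)=0$ for $j<0$, $\alpha=a/b$ and $c(h)=\lfloor\alpha\rfloor+1$. Let $$\alpha_1=2^n+\sqrt{2^{2n}-2^n+2}-\tfrac12,\qquad g(x)=x+\tfrac32-\sqrt{x^2-(2^{n+1}-1)x-\tfrac74}\ \ (x>\alpha_1).$$ Let $d$ be an integer with $2\le d\le c(h)$. Then: (1) if $\alpha\le\alpha_1$, then $\beta_2^d(h)\ge0$; (2) if $\alpha>\alpha_1$ and $d\le g(\alpha)$, then $\beta_2^d(h)\ge0$; (3) if $\alpha>\alpha_1$ and $d>g(\alpha)$, then $\operatorname{hdepth}(h)<d$.
   Context: For a nonzero function $h:\mathbb Z\to\mathbb Z_{\ge 0}$ with $h(j)=0$ for all sufficiently negative $j$, and integers $k\le d$, set $\beta_k^d(h)=\sum_{j\le k}(-1)^{k-j}\binom{d-j}{k-j}h(j)$, and $\operatorname{hdepth}(h)=\max\{d\in\mathbb Z:\ \beta_k^d(h)\ge 0\text{ for all integers }k\le d\}$. *)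

(* Defs.v *)
From HB Require Import structures.
From mathcomp Require Import all_boot all_order all_algebra.
Set Implicit Arguments. Unset Strict Implicit. Unset Printing Implicit Defensive.
Import Order.TTheory GRing.Theory Num.Theory.
Local Open Scope ring_scope.

Definition vanishes_below (h : int -> nat) (L : int) : Prop :=
  forall j : int, j < L -> h j = 0%N.

(* beta_k^d(h) = sum_{j <= k} (-1)^(k-j) C(d-j, k-j) h(j), computed over the
   finite range L <= j <= k, where h vanishes below L (terms with j < L are 0).
   Only used for k <= d, so d - j >= k - j >= 0 for j <= k. *)
Definition betaL (h : int -> nat) (L k d : int) : int :=
  \sum_(i < `|(k - L + 1)%R|%N | L + i%:Z <= k)
     (-1) ^+ `|(k - (L + i%:Z))%R|%N * ('C(`|(d - (L + i%:Z))%R|%N, `|(k - (L + i%:Z))%R|%N))%:Z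
       * (h (L + i%:Z))%:Z.

Definition hdepth_ok (h : int -> nat) (L d : int) : Prop :=
  forall k : int, k <= d -> 0 <= betaL h L k d.

Definition is_hdepth (h : int -> nat) (L m : int) : Prop :=
  hdepth_ok h L m /\ (forall d : int, hdepth_ok h L d -> d <= m).

Definition hpoly (a b n : nat) (j : int) : nat :=
  if 0 <= j then (a * `|j|%N ^ n + b)%N else 0%N.

(* Main.v *)
Require Import Defs.
From HB Require Import structures.
From mathcomp Require Import all_boot all_order all_algebra.
Import Order.TTheory GRing.Theory Num.Theory.
Local Open Scope ring_scope.
From mathcomp Require Import ring lra zify.
From Stdlib Require Import Classical.


Lemma beta2 (h : int -> nat) (F : nat) :
  betaL h 0 2 (F.+2)%:Z = ('C(F.+2,2) * h 0)%:Z - (F.+1 * h 1)%:Z + (h 2)%:Z.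
Proof.
rewrite /betaL /=.
rewrite (_ : (1+1+0+1 = 3)%N) // big_mkcond /=.
rewrite !big_ord_recr big_ord0 /=.
rewrite (_ : (1+1+0 = 2)%N) // (_ : (1+1-1 = 1)%N) // (_ : (1+1-2 = 0)%N) //.
rewrite addn0 (_ : (F.+2 - 1 = F.+1)%N) ?subn1 // (_ : (F.+2 - 2 = F)%N) ?subn2 //.
rewrite bin1 bin0 !add0r sqrrN expr1n expr1 expr0 !mul1r mulN1r !PoszM mulNr.
done.
Qed.

Lemma beta1 (h : int -> nat) (F : nat) :
  betaL h 0 1 (F.+2)%:Z = - (F.+2 * h 0)%:Z + (h 1)%:Z.
Proof.
rewrite /betaL /=.
rewrite big_mkcond /=.
rewrite !big_ord_recr big_ord0 /=.
rewrite addn0 (_ : (1 - 1 = 0)%N) // (_ : (F.+2 - 1 = F.+1)%N) ?subn1 //.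
rewrite bin1 bin0 !add0r expr1 expr0 !mul1r mulN1r !PoszM.
by rewrite addn0 mulNr.
Qed.


Lemma bin2E (F : nat) : ('C(F.+2, 2) * 2 = F.+2 * F.+1)%N.
Proof.
elim: F => [//|F IH]. rewrite binS bin1 mulnDl IH. lia.
Qed.

Lemma key (R : rcfType) (a b n F : nat) : (0 < n)%N -> (0 < b)%N ->
  ((betaL (hpoly a b n) 0 2 (F.+2)%:Z)%:~R : R) =
  b%:R / 2 * (((F.+2)%:R - a%:R / b%:R - 3 / 2) ^+ 2
      - ((a%:R / b%:R) ^+ 2 - (2 ^+ n.+1 - 1) * (a%:R / b%:R) - 7 / 4)).
Proof.
move=> n0 b0.
have h0 : hpoly a b n 0 = b by rewrite /hpoly /= exp0n // muln0.
have h1 : hpoly a b n 1 = (a + b)%N by rewrite /hpoly /= exp1n muln1.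
have h2 : hpoly a b n 2 = (a * 2 ^ n + b)%N by [].
rewrite beta2 h0 h1 h2.
have hC : ('C(F.+2, 2))%:R = ((F.+2)%:R * (F.+1)%:R / 2 : R).
  by rewrite -natrM -bin2E natrM mulfK // pnatr_eq0.
set C := 'C(_, _) in hC *.
have e1 : (F.+1)%:R = F%:R + 1 :> R by rewrite -addn1 natrD.
have e2 : (F.+2)%:R = F%:R + 2 :> R by rewrite -addn2 natrD.
rewrite intrD intrB -!pmulrn !natrM hC !natrD e1 e2 (natrM _ a (2 ^ n)) natrX [2 ^+ n.+1]exprS.
have bn : (b%:R : R) != 0 by rewrite pnatr_eq0 -lt0n.
field. by rewrite bn.
Qed.

Lemma key1 (a b n F : nat) : (0 < n)%N ->
  0 <= betaL (hpoly a b n) 0 1 (F.+2)%:Z -> (F.+2 * b <= a + b)%N.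
Proof.
move=> n0; rewrite beta1.
have h0 : hpoly a b n 0 = b by rewrite /hpoly /= exp0n // muln0.
have h1 : hpoly a b n 1 = (a + b)%N by rewrite /hpoly /= exp1n muln1.
rewrite h0 h1. lia.
Qed.


Lemma max_exists (P : int -> Prop) (N : nat) (lo : int) :
  P lo -> (forall x, P x -> x <= lo + N%:Z) ->
  exists m, P m /\ forall x, P x -> x <= m.
Proof.
elim: N lo => [|N IH] lo Plo Hb.
  by exists lo; split => // x /Hb; rewrite addr0.
case: (classic (P (lo + N.+1%:Z))) => HP.
  by exists (lo + N.+1%:Z); split.
apply: (IH lo) => // x Px.
have := Hb _ Px.
have : x <> lo + N.+1%:Z by move=> E; apply: HP; rewrite -E.
lia.
Qed.

Lemma hdepth_neg1 (h : int -> nat) : hdepth_ok h 0 (-1).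
Proof. move=> k hk; rewrite /betaL big1 // => i hi; lia. Qed.

Lemma int_ge2 (x : int) (F : nat) : -1 + (F.+2)%:Z < x ->
  exists G : nat, x = (G.+2)%:Z /\ (F <= G)%N.
Proof. move=> H; exists (`|x|%N - 2)%N; lia. Qed.

Lemma lt_end (m : int) (F : nat) : m <= -1 + (F.+2)%:Z -> m < (F.+2)%:Z.
Proof. lia. Qed.

Theorem lemma3p4 (R : rcfType) (a b n : nat) (d : int) :
  (0 < a)%N -> (0 < b)%N -> (0 < n)%N ->
  let h := hpoly a b n in
  let alpha : R := a%:R / b%:R in
  let c : nat := (a %/ b + 1)%N in
  let alpha1 : R := 2 ^+ n + Num.sqrt (2 ^+ (2 * n) - 2 ^+ n + 2) - 2^-1 in
  let g (x : R) : R := x + 3 / 2 - Num.sqrt (x ^+ 2 - (2 ^+ n.+1 - 1) * x - 7 / 4) in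
  2 <= d -> d <= c%:Z ->
  (alpha <= alpha1 -> 0 <= betaL h 0 2 d) /\
  (alpha1 < alpha -> d%:~R <= g alpha -> 0 <= betaL h 0 2 d) /\
  (alpha1 < alpha -> g alpha < d%:~R -> exists m : int, is_hdepth h 0 m /\ m < d).
Proof.
move=> a0 b0 n0 h alpha c alpha1 g d2 _.
have [F dF] : exists F : nat, d = (F.+2)%:Z.
  by move: d2; case: d => [[|[|F]]|D] // _; exists F.
subst d.
have dE : ((F.+2)%:Z%:~R : R) = (F.+2)%:R by [].
rewrite dE.
rewrite /g /alpha1.
have Bp : (0 : R) < b%:R by rewrite ltr0n.
have Ap : (0 : R) < a%:R by rewrite ltr0n.
have alE : alpha * b%:R = a%:R by rewrite /alpha mulfVK // gt_eqF.
have alp : 0 < alpha by rewrite /alpha divr_gt0.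
set t : R := 2 ^+ n.
have t1 : 1 <= t by rewrite /t exprn_ege1 // ler1n.
have e2n : (2 : R) ^+ (2 * n) = t ^+ 2 by rewrite mulnC exprM.
have en1 : (2 : R) ^+ n.+1 = 2 * t by rewrite exprS.
rewrite e2n en1.
have harg : (0 : R) <= t ^+ 2 - t + 2 by nra.
set s := Num.sqrt (t ^+ 2 - t + 2).
have s0 : 0 <= s by rewrite sqrtr_ge0.
have s2 : s ^+ 2 = t ^+ 2 - t + 2 by rewrite sqr_sqrtr.
have st : t - 1 / 2 <= s by nra.
have hinv : (2 : R)^-1 = 1 / 2 by rewrite mul1r.
rewrite hinv.
set E : R := (F.+2)%:R.
have E2 : 2 <= E by rewrite /E ler_nat.
have K := key R a b n F n0 b0.
rewrite -/alpha en1 -/E in K.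
have Dq : alpha ^+ 2 - (2 * t - 1) * alpha - 7 / 4
   = (alpha - t + 1 / 2 - s) * (alpha - t + 1 / 2 + s).
  have -> : (alpha - t + 1 / 2 - s) * (alpha - t + 1 / 2 + s)
      = (alpha - t + 1 / 2) ^+ 2 - s ^+ 2 by ring.
  by rewrite s2; field.
split.
  move=> Hal.
  rewrite -(ler0z R) /h K.
  apply: mulr_ge0; first by apply: divr_ge0; [apply: ltW|].
  have D0 : alpha ^+ 2 - (2 * t - 1) * alpha - 7 / 4 <= 0.
    by rewrite Dq; apply: mulr_le0_ge0; lra.
  have := sqr_ge0 (E - alpha - 3 / 2). lra.
have D0 : t + s - 1 / 2 < alpha -> 0 <= alpha ^+ 2 - (2 * t - 1) * alpha - 7 / 4.
  move=> Hal; rewrite Dq; apply: mulr_ge0; lra.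
have r0 : 0 <= Num.sqrt (alpha ^+ 2 - (2 * t - 1) * alpha - 7 / 4) by rewrite sqrtr_ge0.
split.
  move=> Hal Hg.
  rewrite -(ler0z R) /h K.
  apply: mulr_ge0; first by apply: divr_ge0; [apply: ltW|].
  have r2 := sqr_sqrtr (D0 Hal).
  set r := Num.sqrt _ in Hg r0 r2.
  rewrite -r2.
  have -> : (E - alpha - 3 / 2) ^+ 2 - r ^+ 2
     = (E - alpha - 3 / 2 - r) * (E - alpha - 3 / 2 + r) by ring.
  apply: mulr_le0; lra.
move=> Hal Hg.
have r2 := sqr_sqrtr (D0 Hal).
set r := Num.sqrt _ in Hg r0 r2.
have P0 := hdepth_neg1 h.
have Hb : forall x, hdepth_ok h 0 x -> x <= -1 + (F.+2)%:Z.
  move=> x Px; rewrite leNgt; apply/negP => Hx.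
  have [G [xG GF]] := int_ge2 _ _ Hx.
  subst x.
  have H1 := key1 a b n G n0 (Px 1 isT).
  have H2 := Px 2 isT.
  have K2 := key R a b n G n0 b0.
  rewrite -/alpha en1 in K2.
  rewrite -(ler0z R) /h K2 in H2.
  set E' : R := (G.+2)%:R in H2.
  have EE : E <= E' by rewrite /E /E' ler_nat.
  have H1' : E' * b%:R <= a%:R + b%:R.
    by rewrite /E' -natrM -natrD ler_nat.
  rewrite -alE in H1'.
  have E'a : E' <= alpha + 1.
    have : (E' - (alpha + 1)) * b%:R <= 0 by lra.
    by rewrite pmulr_lle0 // subr_le0.
  have v1 : - r < E' - alpha - 3 / 2 by lra.
  have v2 : E' - alpha - 3 / 2 < 0 by lra.
  have Q : (E' - alpha - 3 / 2) ^+ 2 < r ^+ 2.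
    rewrite -sqrrN ltr_pXn2r // ?nnegrE; lra.
  have bp : 0 < b%:R / 2 :> R by apply: divr_gt0.
  move: H2; rewrite pmulr_rge0 // -r2; lra.
have [m [Pm Mm]] := @max_exists (hdepth_ok h 0) F.+2 (-1) P0 Hb.
exists m; split; first by split.
exact: lt_end (Hb _ Pm).
Qed.
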